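(* Let $(N(t))_{t\ge 0}$ be the continuous-time Markov chain on $\{1,2,3,\dots\}$ in which state $1$ is absorbing, from state $2$ the chain jumps to $1$ at rate $2$ and to $3$ at rate $2$, and from each state $n\ge 3$ it jumps to $n+1$ at rate $n$ and to $n-1$ at rate $n$. Start at $N(0)=2$, let $H_1$ be the hitting time of state $1$, and let $F(t)=\mathrm{P}(H_1\le t)$ (which is the solution of the renewal equation $F(t) = \frac{2t}{(1+t)^{3}} + \int_{0}^{t}\frac{2}{(1+(t-y))^{3}}F(y)\, \mathrm{d} y$), with density $F'$. Then, as $h\to\infty$, \[ \int_0^{h}tF'(t)\,\mathrm{d} t \sim \log(h) \qquad\text{and}\qquad \int_0^{h}t^2F'(t)\,\mathrm{d} t \sim h . \]
   Context: Here $a(h)\sim b(h)$ means $a(h)/b(h)\to 1$ as $h\to\infty$. The chain describes the number of coexisting viral types in a birth–death model with equal birth and death rates (each equal to the current number of types), where a single type cannot die; $H_1$ is the return time from two types to one type. *)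

(* Defs.v *)
From Stdlib Require Import Reals.
From Coquelicot Require Import Coquelicot.
Open Scope R_scope.

Definition renewal_g (t : R) : R := 2 * t / (1 + t) ^ 3.

Definition renewal_k (s : R) : R := 2 / (1 + s) ^ 3.

Definition solves_renewal (F : R -> R) : Prop :=
  (forall t, 0 <= t -> filterlim F (at_right t) (locally (F t))) /\
  (forall t, 0 < t -> continuous F t) /\
  (forall t, 0 <= t ->
     F t = renewal_g t + RInt (fun y => renewal_k (t - y) * F y) 0 t).

(* Main.v *)
Require Import Defs.
From Stdlib Require Import Reals Lra.
From Coquelicot Require Import Coquelicot.
Open Scope R_scope.

Lemma is_derive_mulc (f : R -> R) (x l c : R) :
  is_derive f x l -> is_derive (fun z => f z * c) x (l * c).
Proof.
  intros H.
  assert (H2 := is_derive_mult f (fun _ => c) x l 0 H (is_derive_const c x)).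
  replace (l * c) with (plus (mult l c) (mult (f x) 0)).
  - apply H2. intros; apply Rmult_comm.
  - unfold plus, mult; simpl. ring.
Qed.

Lemma derive_shift (κ κ' G : R -> R) (u v : R) :
  is_derive κ (u - v) (κ' (u - v)) ->
  is_derive (fun z => κ (z - v) * G v) u (κ' (u - v) * G v).
Proof.
  intros H.
  apply is_derive_mulc.
  replace (κ' (u - v)) with (scal 1 (κ' (u - v))).
  2:{ unfold scal; simpl; unfold mult; simpl; ring. }
  apply (is_derive_comp κ (fun z => z - v)); auto.
  auto_derive; [exact I | ring].
Qed.

Lemma cont2d_D (κ κ' G : R -> R) (u0 v0 : R) :
  (forall s, -1/2 < s -> is_derive κ s (κ' s)) ->
  (forall s, -1/2 < s -> continuous κ' s) ->
  (forall y, continuous G y) ->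
  -1/2 < u0 - v0 ->
  continuity_2d_pt (fun u v => Derive (fun z => κ (z - v) * G v) u) u0 v0.
Proof.
  intros Hd Hc HG Huv.
  apply continuity_2d_pt_ext_loc with (f := fun u v => κ' (u - v) * G v).
  - assert (Hp : 0 < (u0 - v0 + 1/2) / 2) by lra.
    exists (mkposreal _ Hp). simpl. intros u v Hu Hv.
    symmetry. apply is_derive_unique. apply derive_shift.
    apply Hd. apply Rabs_def2 in Hu. apply Rabs_def2 in Hv. lra.
  - apply continuity_2d_pt_mult.
    + apply (continuity_1d_2d_pt_comp κ' (fun u v => u - v)).
      * apply continuity_pt_filterlim. apply Hc. lra.
      * apply continuity_2d_pt_minus. apply continuity_2d_pt_id1. apply continuity_2d_pt_id2.
    + apply (continuity_1d_2d_pt_comp G (fun u v => v)).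
      * apply continuity_pt_filterlim. apply HG.
      * apply continuity_2d_pt_id2.
Qed.

Lemma loc_of (x r : R) (P : R -> Prop) : 0 < r ->
  (forall y, Rabs (y - x) < r -> P y) -> locally x P.
Proof.
  intros Hr H. exists (mkposreal r Hr). intros y Hy. apply H. exact Hy.
Qed.

Lemma exd_cont (f : R -> R) (x : R) : ex_derive f x -> continuous f x.
Proof. intros H. apply (ex_derive_continuous (K:=R_AbsRing) (V:=R_NormedModule)). exact H. Qed.

Lemma exR_cont (f : R -> R) (a b : R) :
  (forall z, Rmin a b <= z <= Rmax a b -> continuous f z) -> ex_RInt f a b.
Proof. intros H. apply (ex_RInt_continuous (V:=R_CompleteNormedModule)). exact H. Qed.

Lemma cont_prod_shift (κ κ' G : R -> R) (y t : R) :
  (forall s, -1/2 < s -> is_derive κ s (κ' s)) ->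
  (forall y, continuous G y) -> -1/2 < y - t ->
  continuous (fun t => κ (y - t) * G t) t.
Proof.
  intros Hd HG H.
  apply (continuous_mult (fun t => κ (y - t)) G t); [|apply HG].
  apply (@continuous_comp R_UniformSpace R_UniformSpace R_UniformSpace (fun t => y - t) κ t).
  - apply exd_cont. auto_derive. exact I.
  - apply exd_cont. eexists. apply Hd. exact H.
Qed.

Lemma toolA (κ κ' G : R -> R) (x : R) :
  (forall s, -1/2 < s -> is_derive κ s (κ' s)) ->
  (forall s, -1/2 < s -> continuous κ' s) ->
  (forall y, continuous G y) ->
  -1/8 < x ->
  is_derive (fun x => RInt (fun y => κ (x - y) * G y) 0 x) x
    (RInt (fun y => κ' (x - y) * G y) 0 x + κ 0 * G x).
Proof.
  intros Hd Hc HG Hx.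
  assert (H8 : 0 < 1/8) by lra.
  assert (E := is_derive_RInt_param_bound_comp_aux3
    (fun x t => κ (x - t) * G t) 0 (fun x => x) x 1).
  simpl in E.
  replace (κ 0 * G x) with (κ (x - x) * G x * 1) by (replace (x - x) with 0 by ring; ring).
  replace (RInt (fun y => κ' (x - y) * G y) 0 x)
    with (RInt (fun t => Derive (fun u => κ (u - t) * G t) x) 0 x).
  2:{ apply RInt_ext. intros t Ht. apply is_derive_unique. apply derive_shift.
      apply Hd. unfold Rmin, Rmax in Ht; destruct (Rle_dec 0 x); lra. }
  apply E; clear E.
  - apply (loc_of x (1/8)); auto. intros y Hy. apply Rabs_def2 in Hy.
    apply exR_cont. intros z Hz.
    apply (cont_prod_shift κ κ'); auto.
    unfold Rmin, Rmax in Hz; destruct (Rle_dec 0 x); lra.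
  - exists (mkposreal _ H8). apply (loc_of x (1/8)); auto. intros y Hy. apply Rabs_def2 in Hy.
    apply exR_cont. intros z Hz. simpl in Hz.
    apply (cont_prod_shift κ κ'); auto.
    unfold Rmin, Rmax in Hz; destruct (Rle_dec (x - 1/8) (x + 1/8)); lra.
  - auto_derive; [exact I | ring].
  - exists (mkposreal _ H8). apply (loc_of x (1/8)); auto. intros y Hy t Ht. apply Rabs_def2 in Hy.
    simpl in Ht. eexists. apply derive_shift. apply Hd.
    unfold Rmin, Rmax in Ht; destruct (Rle_dec 0 (x - 1/8)); destruct (Rle_dec 0 (x + 1/8)); lra.
  - intros t Ht. apply (cont2d_D κ κ'); auto.
    unfold Rmin, Rmax in Ht; destruct (Rle_dec 0 x); lra.
  - exists (mkposreal _ H8). simpl. intros u v Hu Hv.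
    apply Rabs_def2 in Hu. apply Rabs_def2 in Hv.
    apply (cont2d_D κ κ'); auto. lra.
  - apply continuity_pt_filterlim. apply (cont_prod_shift κ κ'); auto. lra.
Qed.

Lemma cont_eps (f : R -> R) (x : R) : continuous f x ->
  forall eps, 0 < eps -> exists d, 0 < d /\ forall y, Rabs (y - x) < d -> Rabs (f y - f x) < eps.
Proof.
  intros Hc eps He.
  assert (L := Hc (ball (f x) (mkposreal eps He)) (locally_ball _ _)).
  destruct L as [d Hd]. exists d. split. apply cond_pos.
  intros y Hy. apply (Hd y Hy).
Qed.

Lemma RInt_plusR (f g : R -> R) (a b : R) : ex_RInt f a b -> ex_RInt g a b ->
  RInt (fun x => f x + g x) a b = RInt f a b + RInt g a b.
Proof. intros. apply (RInt_plus (V:=R_CompleteNormedModule)); auto. Qed.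

Lemma RInt_minusR (f g : R -> R) (a b : R) : ex_RInt f a b -> ex_RInt g a b ->
  RInt (fun x => f x - g x) a b = RInt f a b - RInt g a b.
Proof. intros. apply (RInt_minus (V:=R_CompleteNormedModule)); auto. Qed.

Lemma RInt_scalR (f : R -> R) (a b l : R) : ex_RInt f a b ->
  RInt (fun x => l * f x) a b = l * RInt f a b.
Proof. intros. apply (RInt_scal (V:=R_CompleteNormedModule)); auto. Qed.

Lemma RInt_ChaslesR (f : R -> R) (a b c : R) : ex_RInt f a b -> ex_RInt f b c ->
  RInt f a b + RInt f b c = RInt f a c.
Proof. intros. apply (RInt_Chasles (V:=R_CompleteNormedModule)); auto. Qed.

Lemma RInt_derR (f df : R -> R) (a b : R) :
  (forall x, Rmin a b <= x <= Rmax a b -> is_derive f x (df x)) ->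
  (forall x, Rmin a b <= x <= Rmax a b -> continuous df x) ->
  RInt df a b = f b - f a.
Proof.
  intros H1 H2. apply is_RInt_unique.
  apply (is_RInt_derive (V:=R_CompleteNormedModule)); auto.
Qed.

Lemma RInt_pointR (f : R -> R) (a : R) : RInt f a a = 0.
Proof. apply (RInt_point (V:=R_CompleteNormedModule)). Qed.

Lemma RInt_constR (a b c : R) : RInt (fun _ => c) a b = (b - a) * c.
Proof. apply (RInt_const (V:=R_CompleteNormedModule)). Qed.

Ltac req := match goal with |- @eq _ ?a ?b => change (@eq R a b) end.
Ltac solve_nz := repeat split; try (apply pow_nonzero; lra);
  try (repeat apply Rmult_integral_contrapositive_currified; lra); try lra.
Definition kd (s : R) : R := -6 / (1 + s) ^ 4.
Definition kdd (s : R) : R := 24 / (1 + s) ^ 5.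
Definition Kb (s : R) : R := 1 / (1 + s) ^ 2.
Definition mk (s : R) : R := - renewal_k s.
Definition gd (s : R) : R := 2 * (1 - 2 * s) / (1 + s) ^ 4.

Lemma d_k s : -1/2 < s -> is_derive renewal_k s (kd s).
Proof.
  intros H. unfold renewal_k, kd. auto_derive; [solve_nz | field; lra].
Qed.

Lemma d_kd s : -1/2 < s -> is_derive kd s (kdd s).
Proof.
  intros H. unfold kdd, kd. auto_derive; [solve_nz | field; lra].
Qed.

Lemma d_Kb s : -1/2 < s -> is_derive Kb s (mk s).
Proof.
  intros H. unfold Kb, mk, renewal_k. auto_derive; [solve_nz | field; lra].
Qed.

Lemma d_g s : -1/2 < s -> is_derive renewal_g s (gd s).
Proof.
  intros H. unfold renewal_g, gd. auto_derive; [solve_nz | field; lra].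
Qed.

Lemma c_kd s : -1/2 < s -> continuous kd s.
Proof. intros H. apply exd_cont. eexists. apply d_kd. auto. Qed.
Lemma c_kdd s : -1/2 < s -> continuous kdd s.
Proof. intros H. apply exd_cont. unfold kdd. auto_derive. solve_nz. Qed.
Lemma c_k s : -1/2 < s -> continuous renewal_k s.
Proof. intros H. apply exd_cont. eexists. apply d_k. auto. Qed.
Lemma c_mk s : -1/2 < s -> continuous mk s.
Proof. intros H. apply exd_cont. unfold mk, renewal_k. auto_derive. solve_nz. Qed.
Lemma c_gd s : -1/2 < s -> continuous gd s.
Proof. intros H. apply exd_cont. unfold gd. auto_derive. solve_nz. Qed.

Lemma eps_cont (f : R -> R) (x : R) :
  (forall eps, 0 < eps -> exists d, 0 < d /\ forall y, Rabs (y - x) < d -> Rabs (f y - f x) < eps) ->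
  continuous f x.
Proof.
  intros H P [e He].
  destruct (H e (cond_pos e)) as [d [Hd Hy]].
  exists (mkposreal d Hd). intros y Hy'. apply He. apply Hy. exact Hy'.
Qed.

Definition Fe (F : R -> R) (y : R) : R := F (Rmax 0 y).
Definition cF (F : R -> R) (t : R) : R := RInt (fun y => renewal_k (t - y) * Fe F y) 0 t.
Definition cdF (F : R -> R) (t : R) : R := RInt (fun y => kd (t - y) * Fe F y) 0 t.
Definition Phi (F : R -> R) (t : R) : R := gd t + cdF F t + 2 * Fe F t.
Definition HH (F : R -> R) (t : R) : R := RInt (Phi F) 0 t.

Lemma F0 F : solves_renewal F -> F 0 = 0.
Proof.
  intros [_ [_ H]]. rewrite H by lra. rewrite RInt_pointR. unfold renewal_g. field.
Qed.

Lemma Fe_pos F y : 0 <= y -> Fe F y = F y.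
Proof. intros H. unfold Fe. rewrite Rmax_right; auto. Qed.

Lemma Fe_cont F : solves_renewal F -> forall y, continuous (Fe F) y.
Proof.
  intros HF y. destruct (Rlt_or_le 0 y) as [Hy | Hy].
  - apply (continuous_ext_loc _ F).
    + apply (loc_of y y); auto. intros z Hz. apply Rabs_def2 in Hz.
      symmetry. apply Fe_pos. lra.
    + destruct HF as [_ [H _]]. apply H. exact Hy.
  - destruct (Rlt_or_le y 0) as [Hy' | Hy'].
    + apply (continuous_ext_loc _ (fun _ => F 0)).
      * apply (loc_of y (-y)); try lra. intros z Hz. apply Rabs_def2 in Hz.
        unfold Fe. rewrite Rmax_left; lra.
      * apply continuous_const.
    + assert (y = 0) by lra. subst y.
      apply eps_cont. intros eps He.
      destruct HF as [H _ ]. assert (H0 := H 0 (Rle_refl 0)).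
      destruct (H0 (ball (F 0) (mkposreal eps He)) (locally_ball _ _)) as [d Hd].
      exists d. split. apply cond_pos. intros z Hz.
      unfold Fe. rewrite (Rmax_left 0 0) by lra.
      destruct (Rle_or_lt z 0) as [Hz0 | Hz0].
      * rewrite Rmax_left by lra. rewrite Rminus_eq_0, Rabs_R0. lra.
      * rewrite Rmax_right by lra. apply (Hd z Hz Hz0).
Qed.

Lemma is_derive_plusR (f g : R -> R) x df dg :
  is_derive f x df -> is_derive g x dg -> is_derive (fun y => f y + g y) x (df + dg).
Proof. intros. apply (is_derive_plus (K:=R_AbsRing) (V:=R_NormedModule)); auto. Qed.
Lemma is_derive_minusR (f g : R -> R) x df dg :
  is_derive f x df -> is_derive g x dg -> is_derive (fun y => f y - g y) x (df - dg).
Proof. intros. apply (is_derive_minus (K:=R_AbsRing) (V:=R_NormedModule)); auto. Qed.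
Lemma cont_plusR (f g : R -> R) x : continuous f x -> continuous g x -> continuous (fun y => f y + g y) x.
Proof. intros. apply (continuous_plus (V:=R_NormedModule) f g); auto. Qed.
Lemma cont_multR (f g : R -> R) x : continuous f x -> continuous g x -> continuous (fun y => f y * g y) x.
Proof. intros. apply (continuous_mult f g); auto. Qed.

Lemma cF_eq F t : 0 <= t ->
  RInt (fun y => renewal_k (t - y) * F y) 0 t = cF F t.
Proof.
  intros Ht. unfold cF. apply RInt_ext. intros y Hy.
  unfold Rmin, Rmax in Hy; destruct (Rle_dec 0 t); try lra.
  rewrite Fe_pos by lra. reflexivity.
Qed.

Lemma ren_eq F t : solves_renewal F -> 0 <= t -> F t = renewal_g t + cF F t.
Proof.
  intros HF Ht. rewrite <- cF_eq by auto. destruct HF as [_ [_ H]]. apply H; auto.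
Qed.

Lemma d_cF F t : solves_renewal F -> -1/8 < t ->
  is_derive (cF F) t (cdF F t + 2 * Fe F t).
Proof.
  intros HF Ht. unfold cF, cdF.
  replace 2 with (renewal_k 0) by (unfold renewal_k; field).
  apply (toolA renewal_k kd (Fe F) t); auto.
  - apply d_k. - apply c_kd. - apply Fe_cont; auto.
Qed.

Lemma d_cdF F t : solves_renewal F -> -1/8 < t ->
  is_derive (cdF F) t (RInt (fun y => kdd (t - y) * Fe F y) 0 t + kd 0 * Fe F t).
Proof.
  intros HF Ht. unfold cdF.
  apply (toolA kd kdd (Fe F) t); auto.
  - apply d_kd. - apply c_kdd. - apply Fe_cont; auto.
Qed.

Lemma Phi_cont F t : solves_renewal F -> -1/8 < t -> continuous (Phi F) t.
Proof.
  intros HF Ht. unfold Phi.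
  apply cont_plusR. apply cont_plusR.
  - apply c_gd. lra.
  - apply exd_cont. eexists. apply d_cdF; auto.
  - apply cont_multR. apply continuous_const. apply Fe_cont; auto.
Qed.

Lemma F'_eq F F' t : solves_renewal F -> (forall t, 0 < t -> is_derive F t (F' t)) ->
  0 < t -> F' t = Phi F t.
Proof.
  intros HF HF' Ht.
  assert (D : is_derive F t (Phi F t)).
  { apply (is_derive_ext_loc (fun u => renewal_g u + cF F u)).
    - apply (loc_of t t); auto. intros u Hu. apply Rabs_def2 in Hu.
      symmetry. apply ren_eq; auto. lra.
    - unfold Phi. rewrite Rplus_assoc. apply is_derive_plusR.
      + apply d_g. lra.
      + apply d_cF; auto. lra. }
  rewrite <- (is_derive_unique _ _ _ (HF' t Ht)).
  apply is_derive_unique. exact D.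
Qed.

Lemma d_HH F t : solves_renewal F -> -1/8 < t -> is_derive (HH F) t (Phi F t).
Proof.
  intros HF Ht. unfold HH.
  apply (is_derive_RInt (V:=R_NormedModule) (Phi F) (fun b => RInt (Phi F) 0 b) 0).
  - apply (loc_of t (t + 1/8)); try lra. intros b Hb. apply Rabs_def2 in Hb.
    apply (RInt_correct (V:=R_CompleteNormedModule)).
    apply exR_cont. intros z Hz. apply Phi_cont; auto.
    unfold Rmin, Rmax in Hz; destruct (Rle_dec 0 b); lra.
  - apply Phi_cont; auto.
Qed.

Lemma HH_eq F F' t : solves_renewal F -> (forall t, 0 < t -> is_derive F t (F' t)) ->
  0 <= t -> HH F t = F t.
Proof.
  intros HF HF' Ht.
  destruct (MVT_gen (fun u => Fe F u - HH F u) 0 t (fun _ => 0)) as [c [_ Hc]].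
  - intros x Hx. unfold Rmin, Rmax in Hx; destruct (Rle_dec 0 t); try lra.
    replace 0 with (Phi F x - Phi F x) by ring.
    apply is_derive_minusR.
    + apply (is_derive_ext_loc F).
      * apply (loc_of x x); try lra. intros u Hu. apply Rabs_def2 in Hu.
        symmetry. apply Fe_pos. lra.
      * rewrite <- F'_eq with (F' := F'); auto; try apply HF'; lra.
    + apply d_HH; auto. lra.
  - intros x Hx. unfold Rmin, Rmax in Hx; destruct (Rle_dec 0 t); try lra.
    apply continuity_pt_filterlim.
    apply (continuous_minus (V:=R_NormedModule) (Fe F) (HH F)).
    + apply Fe_cont; auto.
    + apply exd_cont. eexists. apply d_HH; auto. lra.
  - rewrite Rmult_0_l in Hc.
    unfold HH in Hc. rewrite RInt_pointR in Hc.
    rewrite Fe_pos in Hc by lra. rewrite Fe_pos in Hc by lra.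
    rewrite (F0 F HF) in Hc.
    unfold HH. lra.
Qed.

Lemma d_prod_refl (κ κ' h : R -> R) (t y dh : R) :
  is_derive κ (t - y) (κ' (t - y)) -> is_derive h y dh ->
  is_derive (fun y => κ (t - y) * h y) y (κ (t - y) * dh - κ' (t - y) * h y).
Proof.
  intros Hk Hh.
  assert (Hk2 : is_derive (fun y => κ (t - y)) y (- κ' (t - y))).
  { replace (- κ' (t - y)) with (scal (-1) (κ' (t - y))).
    2:{ unfold scal; simpl; unfold mult; simpl; ring. }
    apply (is_derive_comp κ (fun z => t - z)); auto.
    auto_derive; [exact I | ring]. }
  assert (H2 := is_derive_mult (fun y => κ (t - y)) h y _ _ Hk2 Hh).
  replace (κ (t - y) * dh - κ' (t - y) * h y)
    with (plus (mult (- κ' (t - y)) (h y)) (mult (κ (t - y)) dh)).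
  - apply H2. intros; apply Rmult_comm.
  - unfold plus, mult; simpl. ring.
Qed.

Lemma cont_shift_at (κ κ' G : R -> R) (t y : R) :
  (forall s, -1/2 < s -> is_derive κ s (κ' s)) ->
  continuous G y -> -1/2 < t - y ->
  continuous (fun y => κ (t - y) * G y) y.
Proof.
  intros Hd HG H.
  apply (continuous_mult (fun y => κ (t - y)) G y); [|apply HG].
  apply (@continuous_comp R_UniformSpace R_UniformSpace R_UniformSpace (fun y => t - y) κ y).
  - apply exd_cont. auto_derive. exact I.
  - apply exd_cont. eexists. apply Hd. exact H.
Qed.

Lemma HH_cont F t : solves_renewal F -> -1/8 < t -> continuous (HH F) t.
Proof. intros. apply exd_cont. eexists. apply d_HH; auto. Qed.

Lemma ibp F F' (κ κ' : R -> R) t :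
  solves_renewal F -> (forall t, 0 < t -> is_derive F t (F' t)) ->
  (forall s, -1/2 < s -> is_derive κ s (κ' s)) ->
  (forall s, -1/2 < s -> continuous κ' s) -> 0 <= t ->
  RInt (fun y => κ (t - y) * Phi F y) 0 t = κ 0 * F t + RInt (fun y => κ' (t - y) * Fe F y) 0 t.
Proof.
  intros HF HF' Hd Hc Ht.
  assert (Hk : forall s, -1/2 < s -> is_derive κ' s (Derive κ' s) -> True) by auto.
  assert (R1 : forall z, Rmin 0 t <= z <= Rmax 0 t -> continuous (fun y => κ (t - y) * Phi F y) z).
  { intros z Hz. unfold Rmin, Rmax in Hz; destruct (Rle_dec 0 t); try lra.
    apply (cont_shift_at κ κ'); auto. apply Phi_cont; auto; lra. lra. }
  assert (R2 : forall z, Rmin 0 t <= z <= Rmax 0 t -> continuous (fun y => κ' (t - y) * HH F y) z).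
  { intros z Hz. unfold Rmin, Rmax in Hz; destruct (Rle_dec 0 t); try lra.
    apply (continuous_mult (fun y => κ' (t - y)) (HH F) z).
    - apply (@continuous_comp R_UniformSpace R_UniformSpace R_UniformSpace (fun y => t - y) κ' z).
      + apply exd_cont. auto_derive. exact I.
      + apply Hc. lra.
    - apply HH_cont; auto; lra. }
  assert (E := RInt_derR (fun y => κ (t - y) * HH F y)
      (fun y => κ (t - y) * Phi F y - κ' (t - y) * HH F y) 0 t).
  rewrite RInt_minusR in E by (apply exR_cont; auto).
  replace (RInt (fun y => κ' (t - y) * HH F y) 0 t) with
        (RInt (fun y => κ' (t - y) * Fe F y) 0 t) in E.
  - assert (E' : RInt (fun y => κ (t - y) * Phi F y) 0 t -
        RInt (fun y => κ' (t - y) * Fe F y) 0 t =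
        κ (t - t) * HH F t - κ (t - 0) * HH F 0).
    { apply E.
      + intros x Hx. unfold Rmin, Rmax in Hx; destruct (Rle_dec 0 t); try lra.
        apply d_prod_refl. apply Hd; lra. apply d_HH; auto; lra.
      + intros x Hx.
        apply (continuous_minus (V:=R_NormedModule) (fun y => κ (t - y) * Phi F y)
             (fun y => κ' (t - y) * HH F y)); auto. }
    unfold HH at 2 in E'. rewrite RInt_pointR in E'. rewrite HH_eq with (F' := F') in E' by auto.
    replace (t - t) with 0 in E' by ring. lra.
  - apply RInt_ext. intros x Hx. unfold Rmin, Rmax in Hx; destruct (Rle_dec 0 t); try lra.
    rewrite HH_eq with (F' := F') by (auto; lra). rewrite Fe_pos by lra. reflexivity.
Qed.

Lemma exR_shift (κ κ' : R -> R) F t :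
  solves_renewal F -> (forall s, -1/2 < s -> is_derive κ s (κ' s)) -> 0 <= t ->
  ex_RInt (fun y => κ (t - y) * Phi F y) 0 t.
Proof.
  intros HF Hd Ht. apply exR_cont. intros z Hz.
  unfold Rmin, Rmax in Hz; destruct (Rle_dec 0 t); try lra.
  apply (cont_shift_at κ κ'); auto. apply Phi_cont; auto; lra. lra.
Qed.

Lemma I1 F F' t : solves_renewal F -> (forall t, 0 < t -> is_derive F t (F' t)) -> 0 <= t ->
  Phi F t = gd t + RInt (fun y => renewal_k (t - y) * Phi F y) 0 t.
Proof.
  intros HF HF' Ht.
  rewrite (ibp F F' renewal_k kd t); auto.
  - unfold Phi, cdF. rewrite Fe_pos by auto. unfold renewal_k. field.
  - apply d_k. - apply c_kd.
Qed.

Lemma I2 F F' t : solves_renewal F -> (forall t, 0 < t -> is_derive F t (F' t)) -> 0 <= t ->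
  RInt (fun y => Kb (t - y) * Phi F y) 0 t = renewal_g t.
Proof.
  intros HF HF' Ht.
  rewrite (ibp F F' Kb mk t); auto.
  - replace (RInt (fun y => mk (t - y) * Fe F y) 0 t) with (- cF F t).
    + rewrite (ren_eq F t) by auto. unfold Kb. change (1 / (1 + 0) ^ 2 * (renewal_g t + cF F t) + - cF F t = renewal_g t). field.
    + unfold cF. rewrite <- (Rmult_1_l (RInt _ 0 t)). rewrite Ropp_mult_distr_l.
      rewrite <- RInt_scalR.
      * apply RInt_ext. intros; unfold mk; req; ring.
      * apply exR_cont. intros z Hz.
        unfold Rmin, Rmax in Hz; destruct (Rle_dec 0 t); try lra.
        apply (cont_shift_at renewal_k kd); auto. apply d_k. apply Fe_cont; auto. lra.
  - apply d_Kb. - apply c_mk.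
Qed.

Lemma key_pos F F' t : solves_renewal F -> (forall t, 0 < t -> is_derive F t (F' t)) -> 0 <= t ->
  (forall y, 0 <= y <= t -> 0 <= Phi F y) -> 2 / (1 + t) ^ 4 <= Phi F t.
Proof.
  intros HF HF' Ht Hpos.
  rewrite (I1 F F' t) by auto.
  assert (L : RInt (fun y => 2 / (1 + t) * (Kb (t - y) * Phi F y)) 0 t <=
              RInt (fun y => renewal_k (t - y) * Phi F y) 0 t).
  { apply RInt_le; auto.
    - apply (ex_RInt_scal (V:=R_NormedModule) (fun y => Kb (t - y) * Phi F y)). apply (exR_shift Kb mk); auto. apply d_Kb.
    - apply (exR_shift renewal_k kd); auto. apply d_k.
    - intros y Hy. rewrite <- Rmult_assoc. apply Rmult_le_compat_r.
      + apply Hpos; lra.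
      + unfold Kb, renewal_k.
        replace (2 / (1 + t) * (1 / (1 + (t - y)) ^ 2)) with
          (2 / (1 + (t - y)) ^ 3 * ((1 + (t - y)) / (1 + t))) by (field; lra).
        rewrite <- (Rmult_1_r (2 / (1 + (t - y)) ^ 3)) at 2.
        apply Rmult_le_compat_l.
        * apply Rlt_le. apply Rdiv_lt_0_compat. lra. apply pow_lt. lra.
        * apply Rle_trans with ((1 + t) / (1 + t)); [|right; field; lra].
          unfold Rdiv. apply Rmult_le_compat_r; [left; apply Rinv_0_lt_compat; lra | lra]. }
  rewrite RInt_scalR in L.
  2:{ apply (exR_shift Kb mk); auto. apply d_Kb. }
  rewrite (I2 F F' t) in L by auto.
  unfold gd, renewal_g in *.
  assert (E : 2 * (1 - 2 * t) / (1 + t) ^ 4 + 2 / (1 + t) * (2 * t / (1 + t) ^ 3) = 2 / (1+t)^4)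
    by (field; lra).
  lra.
Qed.

Lemma Phi0 F : solves_renewal F -> Phi F 0 = 2.
Proof.
  intros HF. unfold Phi, cdF. rewrite RInt_pointR. rewrite Fe_pos by lra.
  rewrite (F0 F HF). unfold gd. simpl. field.
Qed.

Lemma Phi_pos F F' : solves_renewal F -> (forall t, 0 < t -> is_derive F t (F' t)) ->
  forall t, 0 <= t -> 0 < Phi F t.
Proof.
  intros HF HF' t1 Ht1.
  destruct (Rlt_or_le 0 (Phi F t1)) as [ok | bad]; auto. exfalso.
  set (E := fun s => 0 <= s /\ forall y, 0 <= y <= s -> 0 < Phi F y).
  assert (Bd : bound E).
  { exists t1. intros s [Hs1 Hs2]. destruct (Rle_or_lt s t1) as [h|h]; auto.
    assert (0 < Phi F t1) by (apply Hs2; lra). lra. }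
  assert (E0 : E 0).
  { split. lra. intros y Hy. assert (y = 0) by lra. subst. rewrite Phi0; auto; lra. }
  destruct (completeness E Bd (ex_intro _ 0 E0)) as [tau [Hub Hlub]].
  assert (Ht0 : 0 <= tau) by (apply Hub; auto).
  assert (A : forall y, 0 <= y < tau -> 0 < Phi F y).
  { intros y Hy. destruct (Rlt_or_le 0 (Phi F y)) as [h|h]; auto.
    exfalso. assert (tau <= y).
    { apply Hlub. intros s [Hs1 Hs2]. destruct (Rle_or_lt s y) as [h2|h2]; auto.
      assert (0 < Phi F y) by (apply Hs2; lra). lra. }
    lra. }
  assert (B : 0 <= Phi F tau).
  { destruct (Rle_or_lt 0 (Phi F tau)) as [h|h]; auto. exfalso.
    destruct (cont_eps (Phi F) tau (Phi_cont F tau HF ltac:(lra)) (- Phi F tau) ltac:(lra))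
      as [d [Hd Hz]].
    destruct (Req_dec tau 0) as [e|e].
    - subst tau. rewrite Phi0 in h; auto; lra.
    - set (z := Rmax 0 (tau - d/2)).
      assert (Hz1 : 0 <= z < tau).
      { unfold z. unfold Rmax; destruct (Rle_dec 0 (tau - d/2)); lra. }
      assert (Hz2 : Rabs (z - tau) < d).
      { unfold z. unfold Rmax; destruct (Rle_dec 0 (tau - d/2)); apply Rabs_def1; lra. }
      specialize (Hz z Hz2). apply Rabs_def2 in Hz. specialize (A z Hz1). lra. }
  assert (C : 2 / (1 + tau) ^ 4 <= Phi F tau).
  { apply (key_pos F F'); auto. intros y Hy.
    destruct (Req_dec y tau) as [e|e]. subst; auto. left. apply A. lra. }
  assert (C' : 0 < Phi F tau).
  { eapply Rlt_le_trans; [|exact C]. apply Rdiv_lt_0_compat. lra. apply pow_lt. lra. }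
  destruct (cont_eps (Phi F) tau (Phi_cont F tau HF ltac:(lra)) (Phi F tau / 2) ltac:(lra))
      as [d [Hd Hz]].
  assert (E1 : E (tau + d/2)).
  { split. lra. intros y Hy. destruct (Rlt_or_le y tau) as [h|h].
    - apply A. lra.
    - assert (Rabs (y - tau) < d) by (apply Rabs_def1; lra).
      specialize (Hz y H). apply Rabs_def2 in Hz. lra. }
  specialize (Hub _ E1). lra.
Qed.

Lemma d_Fe F F' x : solves_renewal F -> (forall t, 0 < t -> is_derive F t (F' t)) ->
  0 < x -> is_derive (Fe F) x (Phi F x).
Proof.
  intros HF HF' Hx. apply (is_derive_ext_loc F).
  - apply (loc_of x x); try lra. intros u Hu. apply Rabs_def2 in Hu.
    symmetry. apply Fe_pos. lra.
  - rewrite <- F'_eq with (F' := F'); auto.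
Qed.

Lemma F_mono F F' a b : solves_renewal F -> (forall t, 0 < t -> is_derive F t (F' t)) ->
  0 <= a -> a <= b -> F a <= F b.
Proof.
  intros HF HF' Ha Hab.
  destruct (MVT_gen (Fe F) a b (Phi F)) as [c [Hc E]].
  - intros x Hx. unfold Rmin, Rmax in Hx; destruct (Rle_dec a b); try lra.
    apply (d_Fe F F'); auto; lra.
  - intros x Hx. apply continuity_pt_filterlim. apply Fe_cont; auto.
  - rewrite Fe_pos in E by lra. rewrite Fe_pos in E by lra.
    unfold Rmin, Rmax in Hc; destruct (Rle_dec a b); try lra.
    assert (0 < Phi F c) by (apply (Phi_pos F F'); auto; lra).
    assert (0 <= Phi F c * (b - a)) by (apply Rmult_le_pos; lra). lra.
Qed.

Definition Te (F : R -> R) (y : R) : R := 1 - Fe F y.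

Lemma Psi_eq F F' t : solves_renewal F -> (forall t, 0 < t -> is_derive F t (F' t)) -> 0 <= t ->
  RInt (fun y => Kb (t - y) * Fe F y) 0 t = t ^ 2 / (1 + t) ^ 2.
Proof.
  intros HF HF' Ht.
  assert (D : forall u, -1/8 < u -> is_derive (fun u => RInt (fun y => Kb (u - y) * Fe F y) 0 u) u
     (RInt (fun y => mk (u - y) * Fe F y) 0 u + Kb 0 * Fe F u)).
  { intros u Hu. apply (toolA Kb mk (Fe F) u); auto. apply d_Kb. apply c_mk. apply Fe_cont; auto. }
  destruct (MVT_gen (fun u => RInt (fun y => Kb (u - y) * Fe F y) 0 u - u ^ 2 / (1 + u) ^ 2) 0 t
      (fun _ => 0)) as [c [_ Hc]].
  - intros x Hx. unfold Rmin, Rmax in Hx; destruct (Rle_dec 0 t); try lra.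
    assert (Hd : is_derive (fun u => RInt (fun y => Kb (u - y) * Fe F y) 0 u - u ^ 2 / (1 + u) ^ 2) x
                  (renewal_g x - renewal_g x)).
    2:{ rewrite Rminus_eq_0 in Hd. exact Hd. }
    apply is_derive_minusR.
    + replace (renewal_g x) with (RInt (fun y => mk (x - y) * Fe F y) 0 x + Kb 0 * Fe F x).
      * exact (D x ltac:(lra)).
      * replace (RInt (fun y => mk (x - y) * Fe F y) 0 x) with (- cF F x).
        -- rewrite Fe_pos by lra. rewrite (ren_eq F x) by (auto; lra). unfold Kb.
           change (- cF F x + 1 / (1 + 0) ^ 2 * (renewal_g x + cF F x) = renewal_g x). field.
        -- unfold cF. rewrite <- (Rmult_1_l (RInt _ 0 x)). rewrite Ropp_mult_distr_l.
           rewrite <- RInt_scalR.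
           ++ apply RInt_ext. intros; unfold mk; req; ring.
           ++ apply exR_cont. intros z Hz.
              unfold Rmin, Rmax in Hz; destruct (Rle_dec 0 x); try lra.
              apply (cont_shift_at renewal_k kd); auto. apply d_k. apply Fe_cont; auto. lra.
    + unfold renewal_g. auto_derive; [solve_nz | field; lra].
  - intros x Hx. unfold Rmin, Rmax in Hx; destruct (Rle_dec 0 t); try lra.
    apply continuity_pt_filterlim.
    apply (continuous_minus (V:=R_NormedModule) (fun u => RInt (fun y => Kb (u - y) * Fe F y) 0 u)
       (fun u => u ^ 2 / (1 + u) ^ 2)).
    + apply exd_cont. eexists. exact (D x ltac:(lra)).
    + apply exd_cont. auto_derive. solve_nz.
  - rewrite RInt_pointR in Hc. replace (0 ^ 2 / (1 + 0) ^ 2) with 0 in Hc by (simpl; field). lra.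
Qed.

Lemma J_eq F F' t : solves_renewal F -> (forall t, 0 < t -> is_derive F t (F' t)) -> 0 <= t ->
  RInt (fun y => Kb (t - y) * Te F y) 0 t = t / (1 + t) ^ 2.
Proof.
  intros HF HF' Ht.
  assert (K1 : RInt (fun y => Kb (t - y)) 0 t = t / (1 + t)).
  { rewrite (RInt_derR (fun y => 1 / (1 + t - y))).
    - req. field. lra.
    - intros x Hx. unfold Rmin, Rmax in Hx; destruct (Rle_dec 0 t); try lra.
      unfold Kb. auto_derive; [solve_nz | field; lra].
    - intros x Hx. unfold Rmin, Rmax in Hx; destruct (Rle_dec 0 t); try lra.
      apply exd_cont. unfold Kb. auto_derive. solve_nz. }
  assert (Ex1 : ex_RInt (fun y => Kb (t - y)) 0 t).
  { apply exR_cont. intros x Hx. unfold Rmin, Rmax in Hx; destruct (Rle_dec 0 t); try lra.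
    apply exd_cont. unfold Kb. auto_derive. solve_nz. }
  assert (Ex2 : ex_RInt (fun y => Kb (t - y) * Fe F y) 0 t).
  { apply exR_cont. intros x Hx. unfold Rmin, Rmax in Hx; destruct (Rle_dec 0 t); try lra.
    apply (cont_shift_at Kb mk); auto. apply d_Kb. apply Fe_cont; auto. lra. }
  transitivity (RInt (fun y => Kb (t - y) - Kb (t - y) * Fe F y) 0 t).
  - apply RInt_ext. intros; unfold Te; req; ring.
  - rewrite RInt_minusR by auto. rewrite K1. rewrite (Psi_eq F F') by auto. req; field. lra.
Qed.

Lemma Kb_int t a b : a <= b -> b <= t ->
  RInt (fun y => Kb (t - y)) a b = 1 / (1 + t - b) - 1 / (1 + t - a).
Proof.
  intros Hab Hbt.
  rewrite (RInt_derR (fun y => 1 / (1 + t - y))).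
  - reflexivity.
  - intros x Hx. unfold Rmin, Rmax in Hx; destruct (Rle_dec a b); try lra.
    unfold Kb. auto_derive; [solve_nz | field; lra].
  - intros x Hx. unfold Rmin, Rmax in Hx; destruct (Rle_dec a b); try lra.
    apply exd_cont. unfold Kb. auto_derive. solve_nz.
Qed.

Lemma ln_int m : 0 <= m -> RInt (fun y => 1 / (1 + y)) 0 m = ln (1 + m).
Proof.
  intros Hm.
  rewrite (RInt_derR (fun y => ln (1 + y))).
  - req. replace (1 + 0) with 1 by ring. rewrite ln_1. ring.
  - intros x Hx. unfold Rmin, Rmax in Hx; destruct (Rle_dec 0 m); try lra.
    auto_derive; [lra | field; lra].
  - intros x Hx. unfold Rmin, Rmax in Hx; destruct (Rle_dec 0 m); try lra.
    apply exd_cont. auto_derive. lra.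
Qed.

Lemma Te_pos F y : 0 <= y -> Te F y = 1 - F y.
Proof. intros. unfold Te. rewrite Fe_pos; auto. Qed.

Lemma Te_cont F y : solves_renewal F -> continuous (Te F) y.
Proof.
  intros HF. apply (continuous_minus (V:=R_NormedModule) (fun _ => 1) (Fe F)).
  apply continuous_const. apply Fe_cont; auto.
Qed.

Lemma exR_KbT F t a b : solves_renewal F -> a <= b -> b <= t ->
  ex_RInt (fun y => Kb (t - y) * Te F y) a b.
Proof.
  intros HF Hab Hbt. apply exR_cont. intros z Hz.
  unfold Rmin, Rmax in Hz; destruct (Rle_dec a b); try lra.
  apply (cont_shift_at Kb mk); auto. apply d_Kb. apply Te_cont; auto. lra.
Qed.

Lemma exR_Kb t a b : a <= b -> b <= t -> ex_RInt (fun y => Kb (t - y)) a b.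
Proof.
  intros Hab Hbt. apply exR_cont. intros z Hz.
  unfold Rmin, Rmax in Hz; destruct (Rle_dec a b); try lra.
  apply exd_cont. unfold Kb. auto_derive. solve_nz.
Qed.

Lemma T_mono F F' a b : solves_renewal F -> (forall t, 0 < t -> is_derive F t (F' t)) ->
  0 <= a -> a <= b -> Te F b <= Te F a.
Proof.
  intros HF HF' Ha Hab. rewrite !Te_pos by lra.
  assert (F a <= F b) by (apply (F_mono F F'); auto). lra.
Qed.

Lemma Kb_pos s : -1 < s -> 0 < Kb s.
Proof. intros. unfold Kb. apply Rdiv_lt_0_compat. lra. apply pow_lt. lra. Qed.

Lemma T_upper F F' t : solves_renewal F -> (forall t, 0 < t -> is_derive F t (F' t)) ->
  0 < t -> Te F t <= 1 / (1 + t).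
Proof.
  intros HF HF' Ht.
  assert (L : RInt (fun y => Te F t * Kb (t - y)) 0 t <= RInt (fun y => Kb (t - y) * Te F y) 0 t).
  { apply RInt_le. lra.
    - apply (ex_RInt_scal (V:=R_NormedModule) (fun y => Kb (t - y))). apply exR_Kb; lra.
    - apply exR_KbT; auto; lra.
    - intros y Hy. rewrite Rmult_comm. apply Rmult_le_compat_l.
      + left. apply Kb_pos. lra.
      + apply (T_mono F F'); auto; lra. }
  rewrite RInt_scalR in L by (apply exR_Kb; lra).
  rewrite (J_eq F F') in L by (auto; lra).
  rewrite Kb_int in L by lra.
  replace (1 / (1 + t - t) - 1 / (1 + t - 0)) with (t / (1 + t)) in L by (field; lra).
  assert (P : 0 < t / (1 + t)) by (apply Rdiv_lt_0_compat; lra).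
  apply (Rmult_le_reg_r (t / (1 + t))); auto.
  replace (1 / (1 + t) * (t / (1 + t))) with (t / (1 + t) ^ 2) by (field; lra). lra.
Qed.

Lemma Kb_anti a b : 0 <= a -> a <= b -> Kb b <= Kb a.
Proof.
  intros Ha Hab. unfold Kb. unfold Rdiv. rewrite !Rmult_1_l.
  apply Rinv_le_contravar. apply pow_lt; lra.
  apply pow_incr. lra.
Qed.

Lemma T_lower F F' t e : solves_renewal F -> (forall t, 0 < t -> is_derive F t (F' t)) ->
  0 < t -> 0 < e < 1 ->
  0 < t / (1 + t) ^ 2 - Kb (e * t) * ln (1 + (1 - e) * t) ->
  t / (1 + t) ^ 2 - Kb (e * t) * ln (1 + (1 - e) * t) <= Te F ((1 - e) * t).
Proof.
  intros HF HF' Ht He HD.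
  set (m := (1 - e) * t) in *.
  assert (Hm : 0 < m < t) by (unfold m; nra).
  assert (J := J_eq F F' t HF HF' ltac:(lra)).
  rewrite <- (RInt_ChaslesR _ 0 m t) in J by (apply exR_KbT; auto; lra).
  assert (P1 : RInt (fun y => Kb (t - y) * Te F y) 0 m <= Kb (e * t) * ln (1 + m)).
  { rewrite <- ln_int by lra. rewrite <- RInt_scalR.
    2:{ apply exR_cont. intros z Hz. unfold Rmin, Rmax in Hz; destruct (Rle_dec 0 m); try lra.
        apply exd_cont. auto_derive. lra. }
    apply RInt_le. lra.
    - apply exR_KbT; auto; lra.
    - apply (ex_RInt_scal (V:=R_NormedModule) (fun y => 1 / (1 + y))).
      apply exR_cont. intros z Hz. unfold Rmin, Rmax in Hz; destruct (Rle_dec 0 m); try lra.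
      apply exd_cont. auto_derive. lra.
    - intros y Hy.
      assert (K1 : Kb (t - y) <= Kb (e * t)) by (apply Kb_anti; unfold m in Hy; nra).
      assert (K0 : 0 < Kb (t - y)) by (apply Kb_pos; lra).
      assert (T1 : Te F y <= 1 / (1 + y)) by (apply (T_upper F F'); auto; lra).
      assert (Q : 0 < 1 / (1 + y)) by (apply Rdiv_lt_0_compat; lra).
      destruct (Rle_or_lt 0 (Te F y)) as [h|h].
      + apply Rmult_le_compat; lra.
      + assert (Kb (t - y) * Te F y <= 0) by nra.
        assert (0 <= Kb (e * t) * (1 / (1 + y))) by (apply Rmult_le_pos; lra). lra. }
  assert (P2 : RInt (fun y => Kb (t - y) * Te F y) m t <= Te F m * (1 - 1 / (1 + e * t))).
  { replace (1 - 1 / (1 + e * t)) with (RInt (fun y => Kb (t - y)) m t).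
    2:{ rewrite Kb_int by lra. replace (1 + t - m) with (1 + e * t) by (unfold m; ring).
        replace (1 + t - t) with 1 by ring. req; field. nra. }
    rewrite <- RInt_scalR by (apply exR_Kb; lra).
    apply RInt_le. lra.
    - apply exR_KbT; auto; lra.
    - apply (ex_RInt_scal (V:=R_NormedModule) (fun y => Kb (t - y))). apply exR_Kb; lra.
    - intros y Hy. rewrite Rmult_comm. apply Rmult_le_compat_r.
      + left. apply Kb_pos. lra.
      + apply (T_mono F F'); auto; lra. }
  assert (C1 : 0 <= 1 - 1 / (1 + e * t) <= 1).
  { assert (0 < 1 / (1 + e * t) <= 1).
    { split. apply Rdiv_lt_0_compat; nra.
      apply Rle_trans with ((1 + e * t) / (1 + e * t)); [|right; field; nra].
      unfold Rdiv. apply Rmult_le_compat_r; [left; apply Rinv_0_lt_compat; nra | nra]. }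
    lra. }
  set (c := 1 - 1 / (1 + e * t)) in *.
  set (X := Te F m) in *.
  set (B := Kb (e * t) * ln (1 + m)) in *.
  assert (XD : t / (1 + t) ^ 2 - B <= X * c) by lra.
  destruct (Rle_or_lt X 0) as [h|h].
  - assert (X * c <= 0) by nra. lra.
  - assert (X * c <= X) by nra. lra.
Qed.

Lemma arith_a t e : 2 / e < t -> 0 < e < 1 -> 0 < t ->
  1 - 2 * e < (1 - e) * t * (t / (1 + t) ^ 2).
Proof.
  intros H1 He Ht.
  assert (A : t * (t / (1 + t) ^ 2) - (1 - 2 / t) = (3 * t + 2) / (t * (1 + t) ^ 2)) by (field; lra).
  assert (B : 0 <= (3 * t + 2) / (t * (1 + t) ^ 2)).
  { left. apply Rdiv_lt_0_compat. lra. apply Rmult_lt_0_compat; auto. apply pow_lt; lra. }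
  assert (C : 2 / t < e).
  { apply (Rmult_lt_reg_r t); auto. replace (2 / t * t) with 2 by (field; lra).
    apply (Rmult_lt_reg_r (/ e)). apply Rinv_0_lt_compat; lra.
    replace (e * t * / e) with t by (field; lra). exact H1. }
  assert (D : 0 < 2 / t) by (apply Rdiv_lt_0_compat; lra).
  replace ((1 - e) * t * (t / (1 + t) ^ 2)) with ((1 - e) * (t * (t / (1 + t) ^ 2))) by ring.
  nra.
Qed.

Lemma arith_b t e L : 0 < e -> 1 <= t -> 0 <= L -> L < e * e * e * (1 + t) ->
  t * Kb (e * t) * L <= 2 * e.
Proof.
  intros He Ht HL HL2.
  assert (K : Kb (e * t) <= 1 / (e * t) ^ 2).
  { unfold Kb. unfold Rdiv. rewrite !Rmult_1_l. apply Rinv_le_contravar.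
    apply pow_lt. nra. apply pow_incr. nra. }
  assert (K0 : 0 <= Kb (e * t)) by (left; apply Kb_pos; nra).
  apply Rle_trans with (t * (1 / (e * t) ^ 2) * L).
  { apply Rmult_le_compat_r; auto. apply Rmult_le_compat_l; lra. }
  replace (t * (1 / (e * t) ^ 2) * L) with (L / (e * e * t)) by (field; nra).
  apply (Rmult_le_reg_r (e * e * t)). nra.
  replace (L / (e * e * t) * (e * e * t)) with L by (field; nra).
  nra.
Qed.

Lemma T_asym F F' : solves_renewal F -> (forall t, 0 < t -> is_derive F t (F' t)) ->
  forall eps, 0 < eps -> exists M, 0 < M /\ forall s, M < s -> 1 - eps < s * Te F s <= 1.
Proof.
  intros HF HF' eps Heps.
  set (e := Rmin (eps / 4) (1 / 8)).
  assert (He : 0 < e <= 1/8) by (unfold e, Rmin; destruct (Rle_dec (eps/4) (1/8)); lra).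
  assert (He2 : e <= eps / 4) by (unfold e, Rmin; destruct (Rle_dec (eps/4) (1/8)); lra).
  assert (Hd : 0 < e * e * e) by (apply Rmult_lt_0_compat; nra).
  assert (LN := proj2 (is_lim_spec _ _ _) is_lim_div_ln_p (mkposreal _ Hd)).
  destruct LN as [N HN]. simpl in HN.
  set (M := Rmax (Rmax 2 (2 / e + 1)) N).
  assert (HM1 : 2 <= M) by (unfold M; eapply Rle_trans; [|apply Rmax_l]; apply Rmax_l).
  assert (HM2 : 2 / e + 1 <= M) by (unfold M; eapply Rle_trans; [|apply Rmax_l]; apply Rmax_r).
  assert (HM3 : N <= M) by (unfold M; apply Rmax_r).
  exists M. split. lra. intros s Hs.
  split.
  - set (t := s / (1 - e)).
    assert (Hst : s = (1 - e) * t) by (unfold t; field; lra).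
    assert (Hts : s <= t).
    { unfold t. apply (Rmult_le_reg_r (1 - e)). lra. replace (s / (1 - e) * (1 - e)) with s by (field; lra). nra. }
    assert (Ht1 : 1 <= t) by lra.
    assert (L0 : 0 <= ln (1 + s)) by (rewrite <- ln_1; apply ln_le; lra).
    assert (L1 : ln (1 + s) <= ln (1 + t)) by (apply ln_le; lra).
    assert (L2 : ln (1 + t) < e * e * e * (1 + t)).
    { assert (h := HN (1 + t) ltac:(lra)). rewrite Rminus_0_r in h. apply Rabs_def2 in h.
      destruct h as [h _]. apply (Rmult_lt_reg_r (/ (1 + t))). apply Rinv_0_lt_compat; lra.
      replace (e * e * e * (1 + t) * / (1 + t)) with (e * e * e) by (field; lra). exact h. }
    assert (A := arith_a t e ltac:(lra) ltac:(lra) ltac:(lra)).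
    assert (B := arith_b t e (ln (1 + s)) ltac:(lra) Ht1 L0 ltac:(lra)).
    assert (K0 : 0 <= Kb (e * t)) by (left; apply Kb_pos; nra).
    assert (Bs : s * Kb (e * t) * ln (1 + s) <= 2 * e).
    { eapply Rle_trans; [|exact B]. apply Rmult_le_compat_r; auto.
      apply Rmult_le_compat_r; auto. }
    assert (EQ : s * (t / (1 + t) ^ 2 - Kb (e * t) * ln (1 + s)) =
            (1 - e) * t * (t / (1 + t) ^ 2) - s * Kb (e * t) * ln (1 + s)).
    { rewrite Hst. ring. }
    assert (Pos : 0 < t / (1 + t) ^ 2 - Kb (e * t) * ln (1 + (1 - e) * t)).
    { rewrite <- Hst. apply (Rmult_lt_reg_l s). lra. rewrite Rmult_0_r.
      rewrite EQ. lra. }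
    assert (TL := T_lower F F' t e HF HF' ltac:(lra) ltac:(lra) Pos).
    rewrite <- Hst in TL.
    assert (s * (t / (1 + t) ^ 2 - Kb (e * t) * ln (1 + s)) <= s * Te F s)
      by (apply Rmult_le_compat_l; lra).
    lra.
  - assert (U := T_upper F F' s HF HF' ltac:(lra)).
    assert (s * Te F s <= s * (1 / (1 + s))) by (apply Rmult_le_compat_l; lra).
    assert (s * (1 / (1 + s)) <= 1).
    { replace (s * (1 / (1 + s))) with (s / (1 + s)) by (field; lra).
      apply Rle_trans with ((1 + s) / (1 + s)); [|right; field; lra].
      unfold Rdiv. apply Rmult_le_compat_r; [left; apply Rinv_0_lt_compat; lra | lra]. }
    lra.
Qed.

Lemma Te_nonneg F F' y : solves_renewal F -> (forall t, 0 < t -> is_derive F t (F' t)) ->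
  0 <= y -> 0 <= Te F y.
Proof.
  intros HF HF' Hy.
  destruct (T_asym F F' HF HF' (1/2) ltac:(lra)) as [M [HM H]].
  set (s := Rmax y M + 1).
  assert (Hs1 : M < s) by (unfold s; generalize (Rmax_r y M); lra).
  assert (Hs2 : y <= s) by (unfold s; generalize (Rmax_l y M); lra).
  destruct (H s Hs1) as [h _].
  assert (0 < Te F s).
  { destruct (Rle_or_lt (Te F s) 0) as [h2|h2]; auto.
    assert (s * Te F s <= 0) by nra. lra. }
  assert (Te F s <= Te F y) by (apply (T_mono F F'); auto). lra.
Qed.

Lemma I1_eq F F' h : solves_renewal F -> (forall t, 0 < t -> is_derive F t (F' t)) -> 0 < h ->
  RInt (fun t => t * F' t) 0 h = RInt (Te F) 0 h - h * Te F h.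
Proof.
  intros HF HF' Hh.
  transitivity (RInt (fun t => t * Phi F t) 0 h).
  { apply RInt_ext. intros x Hx. unfold Rmin, Rmax in Hx; destruct (Rle_dec 0 h); try lra.
    rewrite (F'_eq F F' x) by (auto; lra). reflexivity. }
  assert (E1 : ex_RInt (fun t => HH F t - 1) 0 h).
  { apply exR_cont. intros z Hz. unfold Rmin, Rmax in Hz; destruct (Rle_dec 0 h); try lra.
    apply (continuous_minus (V:=R_NormedModule) (HH F) (fun _ => 1)).
    apply HH_cont; auto; lra. apply continuous_const. }
  assert (E2 : ex_RInt (fun t => t * Phi F t) 0 h).
  { apply exR_cont. intros z Hz. unfold Rmin, Rmax in Hz; destruct (Rle_dec 0 h); try lra.
    apply cont_multR. apply continuous_id. apply Phi_cont; auto; lra. }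
  assert (D := RInt_derR (fun t => t * (HH F t - 1)) (fun t => (HH F t - 1) + t * Phi F t) 0 h).
  rewrite RInt_plusR in D by auto.
  assert (D' : RInt (fun t => HH F t - 1) 0 h + RInt (fun t => t * Phi F t) 0 h =
            h * (HH F h - 1) - 0 * (HH F 0 - 1)).
  { apply D.
    - intros x Hx. unfold Rmin, Rmax in Hx; destruct (Rle_dec 0 h); try lra.
      assert (Q := is_derive_mult (fun t => t) (fun t => HH F t - 1) x 1 (Phi F x)).
      replace (HH F x - 1 + x * Phi F x) with (plus (mult 1 (HH F x - 1)) (mult x (Phi F x))).
      + apply Q. apply (is_derive_id (K:=R_AbsRing)).
        replace (Phi F x) with (Phi F x - 0) by ring.
        apply is_derive_minusR. apply d_HH; auto; lra. auto_derive; [exact I | ring].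
        intros; apply Rmult_comm.
      + unfold plus, mult; simpl. ring.
    - intros x Hx. unfold Rmin, Rmax in Hx; destruct (Rle_dec 0 h); try lra.
      apply cont_plusR.
      + apply (continuous_minus (V:=R_NormedModule) (HH F) (fun _ => 1)).
        apply HH_cont; auto; lra. apply continuous_const.
      + apply cont_multR. apply continuous_id. apply Phi_cont; auto; lra. }
  assert (R1 : RInt (fun t => HH F t - 1) 0 h = - RInt (Te F) 0 h).
  { rewrite <- (Rmult_1_l (RInt (Te F) 0 h)). rewrite Ropp_mult_distr_l.
    rewrite <- RInt_scalR.
    - apply RInt_ext. intros x Hx. unfold Rmin, Rmax in Hx; destruct (Rle_dec 0 h); try lra.
      rewrite (HH_eq F F') by (auto; lra). rewrite Te_pos by lra. req; ring.
    - apply exR_cont. intros z Hz. apply Te_cont; auto. }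
  rewrite (HH_eq F F') in D' by (auto; lra). rewrite Te_pos by lra. lra.
Qed.

Lemma I2_eq F F' h : solves_renewal F -> (forall t, 0 < t -> is_derive F t (F' t)) -> 0 < h ->
  RInt (fun t => t ^ 2 * F' t) 0 h = 2 * RInt (fun t => t * Te F t) 0 h - h ^ 2 * Te F h.
Proof.
  intros HF HF' Hh.
  transitivity (RInt (fun t => t ^ 2 * Phi F t) 0 h).
  { apply RInt_ext. intros x Hx. unfold Rmin, Rmax in Hx; destruct (Rle_dec 0 h); try lra.
    rewrite (F'_eq F F' x) by (auto; lra). reflexivity. }
  assert (CH : forall z, 0 <= z -> continuous (fun t => HH F t - 1) z).
  { intros z Hz. apply (continuous_minus (V:=R_NormedModule) (HH F) (fun _ => 1)).
    apply HH_cont; auto; lra. apply continuous_const. }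
  assert (C1 : forall z, 0 <= z -> continuous (fun t => 2 * t * (HH F t - 1)) z).
  { intros z Hz. apply (cont_multR (fun t => 2 * t) (fun t => HH F t - 1)); [apply exd_cont; auto_derive; exact I | apply CH; auto]. }
  assert (C2 : forall z, 0 <= z -> continuous (fun t => t ^ 2 * Phi F t) z).
  { intros z Hz. apply cont_multR. apply exd_cont. auto_derive. exact I. apply Phi_cont; auto; lra. }
  assert (E1 : ex_RInt (fun t => 2 * t * (HH F t - 1)) 0 h).
  { apply exR_cont. intros z Hz. unfold Rmin, Rmax in Hz; destruct (Rle_dec 0 h); try lra. apply C1; lra. }
  assert (E2 : ex_RInt (fun t => t ^ 2 * Phi F t) 0 h).
  { apply exR_cont. intros z Hz. unfold Rmin, Rmax in Hz; destruct (Rle_dec 0 h); try lra. apply C2; lra. }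
  assert (D := RInt_derR (fun t => t ^ 2 * (HH F t - 1)) (fun t => 2 * t * (HH F t - 1) + t ^ 2 * Phi F t) 0 h).
  rewrite RInt_plusR in D by auto.
  assert (D' : RInt (fun t => 2 * t * (HH F t - 1)) 0 h + RInt (fun t => t ^ 2 * Phi F t) 0 h =
            h ^ 2 * (HH F h - 1) - 0 ^ 2 * (HH F 0 - 1)).
  { apply D.
    - intros x Hx. unfold Rmin, Rmax in Hx; destruct (Rle_dec 0 h); try lra.
      assert (Q := is_derive_mult (fun t => t ^ 2) (fun t => HH F t - 1) x (2 * x) (Phi F x)).
      replace (2 * x * (HH F x - 1) + x ^ 2 * Phi F x) with
         (plus (mult (2 * x) (HH F x - 1)) (mult (x ^ 2) (Phi F x))).
      + apply Q. auto_derive; [exact I | ring].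
        replace (Phi F x) with (Phi F x - 0) by ring.
        apply is_derive_minusR. apply d_HH; auto; lra. auto_derive; [exact I | ring].
        intros; apply Rmult_comm.
      + unfold plus, mult; simpl. ring.
    - intros x Hx. unfold Rmin, Rmax in Hx; destruct (Rle_dec 0 h); try lra.
      apply cont_plusR; [apply C1 | apply C2]; lra. }
  assert (R1 : RInt (fun t => 2 * t * (HH F t - 1)) 0 h = - 2 * RInt (fun t => t * Te F t) 0 h).
  { rewrite <- RInt_scalR.
    - apply RInt_ext. intros x Hx. unfold Rmin, Rmax in Hx; destruct (Rle_dec 0 h); try lra.
      rewrite (HH_eq F F') by (auto; lra). rewrite Te_pos by lra. req; ring.
    - apply exR_cont. intros z Hz. apply cont_multR. apply continuous_id. apply Te_cont; auto. }
  rewrite (HH_eq F F') in D' by (auto; lra). rewrite Te_pos by lra.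
  replace (0 ^ 2 * (F 0 - 1)) with 0 in D' by (simpl; ring). lra.
Qed.

Lemma ratio_bound x a eps : 0 < a -> (1 - eps) * a < x -> x < (1 + eps) * a ->
  Rabs (x / a - 1) < eps.
Proof.
  intros Ha H1 H2. apply Rabs_def1.
  - apply (Rmult_lt_reg_r a); auto. replace ((x / a - 1) * a) with (x - a) by (field; lra). lra.
  - apply (Rmult_lt_reg_r a); auto. replace ((x / a - 1) * a) with (x - a) by (field; lra). lra.
Qed.

Lemma inv_int a b : 0 < a -> a <= b -> RInt (fun y => 1 / y) a b = ln b - ln a.
Proof.
  intros Ha Hab. rewrite (RInt_derR ln).
  - reflexivity.
  - intros x Hx. unfold Rmin, Rmax in Hx; destruct (Rle_dec a b); try lra.
    auto_derive; [lra | field; lra].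
  - intros x Hx. unfold Rmin, Rmax in Hx; destruct (Rle_dec a b); try lra.
    apply exd_cont. auto_derive. lra.
Qed.

Lemma exR_inv a b : 0 < a -> a <= b -> ex_RInt (fun y => 1 / y) a b.
Proof.
  intros Ha Hab. apply exR_cont. intros x Hx. unfold Rmin, Rmax in Hx; destruct (Rle_dec a b); try lra.
  apply exd_cont. auto_derive. lra.
Qed.

Lemma exR_Te F a b : solves_renewal F -> ex_RInt (Te F) a b.
Proof. intros HF. apply exR_cont. intros; apply Te_cont; auto. Qed.

Lemma exR_tTe F a b : solves_renewal F -> ex_RInt (fun t => t * Te F t) a b.
Proof. intros HF. apply exR_cont. intros; apply cont_multR. apply continuous_id. apply Te_cont; auto. Qed.

Lemma lim1 F F' : solves_renewal F -> (forall t, 0 < t -> is_derive F t (F' t)) ->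
  is_lim (fun h => RInt (fun t => t * F' t) 0 h / ln h) p_infty 1.
Proof.
  intros HF HF'. apply is_lim_spec. intros [eps Heps]. simpl.
  set (eta := eps / 4).
  destruct (T_asym F F' HF HF' eta ltac:(unfold eta; lra)) as [Y [HY HTY]].
  set (Y' := Rmax Y 1).
  assert (HY1 : 1 <= Y') by apply Rmax_r.
  assert (HY2 : Y <= Y') by apply Rmax_l.
  assert (LY : 0 <= ln Y') by (rewrite <- ln_1; apply ln_le; lra).
  set (K := (ln Y' + 1) / eta + 1 / eps + 1).
  assert (HK1 : (ln Y' + 1) / eta <= K).
  { unfold K. assert (0 < 1 / eps) by (apply Rdiv_lt_0_compat; lra). lra. }
  assert (HK2 : 1 / eps <= K).
  { unfold K. assert (0 <= (ln Y' + 1) / eta) by (apply Rdiv_le_0_compat; unfold eta; lra). lra. }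
  exists (Rmax (Y' + 1) (exp K)). intros h Hh.
  assert (Hh1 : Y' + 1 < h) by (eapply Rle_lt_trans; [apply Rmax_l | exact Hh]).
  assert (Hh2 : exp K < h) by (eapply Rle_lt_trans; [apply Rmax_r | exact Hh]).
  assert (Lh : K < ln h).
  { rewrite <- (ln_exp K). apply ln_increasing. apply exp_pos. auto. }
  assert (Lh0 : 0 < ln h).
  { assert (0 < 1 / eps) by (apply Rdiv_lt_0_compat; lra). lra. }
  rewrite (I1_eq F F' h) by (auto; lra).
  destruct (HTY h ltac:(lra)) as [_ hT1].
  assert (hT0 : 0 <= h * Te F h) by (apply Rmult_le_pos; [lra | apply (Te_nonneg F F'); auto; lra]).
  assert (U : RInt (Te F) 0 h <= 1 + ln h).
  { rewrite <- (RInt_ChaslesR (Te F) 0 1 h) by (apply exR_Te; auto).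
    assert (U1 : RInt (Te F) 0 1 <= 1).
    { apply Rle_trans with (RInt (fun _ => 1) 0 1).
      2:{ rewrite RInt_constR. lra. }
      apply RInt_le. lra. apply exR_Te; auto.
      apply exR_cont. intros; apply continuous_const.
      intros y Hy. assert (Te F y <= Te F 0) by (apply (T_mono F F'); auto; lra).
      rewrite (Te_pos F 0) in H by lra. rewrite (F0 F HF) in H. lra. }
    assert (U2 : RInt (Te F) 1 h <= ln h).
    { replace (ln h) with (RInt (fun y => 1 / y) 1 h) by (rewrite inv_int by lra; rewrite ln_1; req; ring).
      apply RInt_le. lra. apply exR_Te; auto. apply exR_inv; lra.
      intros y Hy. assert (Te F y <= 1 / (1 + y)) by (apply (T_upper F F'); auto; lra).
      assert (1 / (1 + y) <= 1 / y).
      { unfold Rdiv. rewrite !Rmult_1_l. apply Rinv_le_contravar; lra. }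
      lra. }
    lra. }
  assert (L : (1 - eta) * (ln h - ln Y') <= RInt (Te F) 0 h).
  { rewrite <- (RInt_ChaslesR (Te F) 0 Y' h) by (apply exR_Te; auto).
    assert (L1 : 0 <= RInt (Te F) 0 Y').
    { apply RInt_ge_0. lra. apply exR_Te; auto. intros; apply (Te_nonneg F F'); auto; lra. }
    assert (L2 : (1 - eta) * (ln h - ln Y') <= RInt (Te F) Y' h).
    { rewrite <- inv_int by lra. rewrite <- RInt_scalR by (apply exR_inv; lra).
      apply RInt_le. lra.
      - apply (ex_RInt_scal (V:=R_NormedModule) (fun y => 1 / y)). apply exR_inv; lra.
      - apply exR_Te; auto.
      - intros y Hy. destruct (HTY y ltac:(lra)) as [h1 _].
        apply (Rmult_le_reg_r y). lra.
        replace ((1 - eta) * (1 / y) * y) with (1 - eta) by (field; lra).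
        rewrite Rmult_comm. lra. }
    lra. }
  apply ratio_bound; auto.
  - assert (eta * ln h > ln Y' + 1).
    { apply (Rmult_lt_reg_r (/ eta)). apply Rinv_0_lt_compat. unfold eta; lra.
      replace (eta * ln h * / eta) with (ln h) by (field; unfold eta; lra).
      unfold Rdiv in HK1. lra. }
    assert ((1 - eta) * ln Y' <= ln Y') by (unfold eta in *; nra).
    unfold eta in *. nra.
  - assert (eps * ln h > 1).
    { apply (Rmult_lt_reg_r (/ eps)). apply Rinv_0_lt_compat. lra.
      replace (eps * ln h * / eps) with (ln h) by (field; lra).
      unfold Rdiv in HK2. lra. }
    nra.
Qed.

Lemma lim2 F F' : solves_renewal F -> (forall t, 0 < t -> is_derive F t (F' t)) ->
  is_lim (fun h => RInt (fun t => t ^ 2 * F' t) 0 h / h) p_infty 1.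
Proof.
  intros HF HF'. apply is_lim_spec. intros [eps Heps]. simpl.
  set (eta := eps / 4).
  destruct (T_asym F F' HF HF' eta ltac:(unfold eta; lra)) as [Y [HY HTY]].
  set (Y' := Rmax Y 1).
  assert (HY1 : 1 <= Y') by apply Rmax_r.
  assert (HY2 : Y <= Y') by apply Rmax_l.
  exists (Rmax (Y' + 1) (2 * Y' / eta + 1)). intros h Hh.
  assert (Hh1 : Y' + 1 < h) by (eapply Rle_lt_trans; [apply Rmax_l | exact Hh]).
  assert (Hh2 : 2 * Y' / eta + 1 < h) by (eapply Rle_lt_trans; [apply Rmax_r | exact Hh]).
  replace (RInt (fun t => t * (t * 1) * F' t) 0 h) with (RInt (fun t => t ^ 2 * F' t) 0 h) by reflexivity.
  rewrite (I2_eq F F' h) by (auto; lra).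
  destruct (HTY h ltac:(lra)) as [hT0 hT1].
  assert (E1 : h ^ 2 * Te F h = h * (h * Te F h)) by ring.
  assert (U : RInt (fun t => t * Te F t) 0 h <= h).
  { apply Rle_trans with (RInt (fun _ => 1) 0 h).
    2:{ rewrite RInt_constR. lra. }
    apply RInt_le. lra. apply exR_tTe; auto.
    apply exR_cont. intros; apply continuous_const.
    intros y Hy. assert (Te F y <= 1 / (1 + y)) by (apply (T_upper F F'); auto; lra).
    assert (y * Te F y <= y * (1 / (1 + y))) by (apply Rmult_le_compat_l; lra).
    assert (y * (1 / (1 + y)) <= 1).
    { replace (y * (1 / (1 + y))) with (y / (1 + y)) by (field; lra).
      apply Rle_trans with ((1 + y) / (1 + y)); [|right; field; lra].
      unfold Rdiv. apply Rmult_le_compat_r; [left; apply Rinv_0_lt_compat; lra | lra]. }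
    lra. }
  assert (L : (1 - eta) * (h - Y') <= RInt (fun t => t * Te F t) 0 h).
  { rewrite <- (RInt_ChaslesR _ 0 Y' h) by (apply exR_tTe; auto).
    assert (L1 : 0 <= RInt (fun t => t * Te F t) 0 Y').
    { apply RInt_ge_0. lra. apply exR_tTe; auto. intros y Hy.
      apply Rmult_le_pos. lra. apply (Te_nonneg F F'); auto; lra. }
    assert (L2 : (1 - eta) * (h - Y') <= RInt (fun t => t * Te F t) Y' h).
    { apply Rle_trans with (RInt (fun _ => 1 - eta) Y' h).
      { rewrite RInt_constR. lra. }
      apply RInt_le. lra.
      - apply exR_cont. intros; apply continuous_const.
      - apply exR_tTe; auto.
      - intros y Hy. destruct (HTY y ltac:(lra)) as [h1 _]. lra. }
    lra. }
  apply ratio_bound; try lra.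
  - assert (eta * h > 2 * Y').
    { apply (Rmult_lt_reg_r (/ eta)). apply Rinv_0_lt_compat. unfold eta; lra.
      replace (eta * h * / eta) with h by (field; unfold eta; lra).
      unfold Rdiv in Hh2. lra. }
    assert (h * (h * Te F h) <= h * 1) by (apply Rmult_le_compat_l; lra).
    unfold eta in *. nra.
  - assert (h * (1 - eta) < h * (h * Te F h)) by (apply Rmult_lt_compat_l; lra).
    unfold eta in *. nra.
Qed.

Theorem lemma2 (F F' : R -> R)
  (HF : solves_renewal F)
  (HF' : forall t, 0 < t -> is_derive F t (F' t)) :
  is_lim (fun h => RInt (fun t => t * F' t) 0 h / ln h) p_infty 1 /\
  is_lim (fun h => RInt (fun t => t ^ 2 * F' t) 0 h / h) p_infty 1.
Proof.
  split.
  - apply (lim1 F F'); auto.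
  - apply (lim2 F F'); auto.
Qed.
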